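(* For every $n\ge 3$, the power graph $P(G(n))$ of the gyrogroup $G(n)$ (defined in the context) is not Hamiltonian.
   Context: Let $n\ge 3$ be an integer and $m=2^{n-1}$. Let $P(n)=\{0,1,\dots,m-1\}$, $H(n)=\{m,m+1,\dots,2^n-1\}$ and $G(n)=P(n)\cup H(n)$. For $i,j\in G(n)$ let $t,s,k\in P(n)$ be the residues modulo $m$ (taken in $\{0,\dots,m-1\}$) of $i+j$, $i+(\frac m2-1)j$ and $(\frac m2+1)i+(\frac m2-1)j$, respectively, and define $i\oplus j=t$ if $i,j\in P(n)$; $i\oplus j=t+m$ if $i\in P(n),j\in H(n)$; $i\oplus j=s+m$ if $i\in H(n),j\in P(n)$; $i\oplus j=k$ if $i,j\in H(n)$. Then $(G(n),\oplus)$ is a gyrogroup with identity $e=0$. Powers are defined by $a^1=a$, $a^{k+1}=a^k\oplus a$. The power graph $P(G(n))$ is the simple undirected graph with vertex set $G(n)$ in which distinct vertices $u,v$ are adjacent if and only if $u^k=v$ or $v^k=u$ for some positive integer $k$. A graph is Hamiltonian if it has a cycle passing through every vertex. *)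

(* Defs.v *)
From mathcomp Require Import all_boot.
Set Implicit Arguments. Unset Strict Implicit. Unset Printing Implicit Defensive.

(* The gyrogroup G(n) on {0,...,2^n-1}, with m = 2^(n-1),
   P(n) = {0..m-1}, H(n) = {m..2^n-1}. Operations on nat. *)
Definition gm (n : nat) : nat := 2 ^ n.-1.

Definition goplus (n i j : nat) : nat :=
  let m := gm n in
  let t := (i + j) %% m in
  let s := (i + (m %/ 2 - 1) * j) %% m in
  let k := ((m %/ 2 + 1) * i + (m %/ 2 - 1) * j) %% m in
  if i < m then (if j < m then t else t + m)
  else (if j < m then s + m else k).

(* a^1 = a, a^(k+1) = a^k (+) a ; gpow n a k = a^(k+1) *)
Fixpoint gpow (n a k : nat) : nat :=
  match k with
  | 0 => a
  | k'.+1 => goplus n (gpow n a k') a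
  end.

Definition power_adj (n : nat) (u v : 'I_(2 ^ n)) : Prop :=
  u <> v /\ exists k, 0 < k /\ (gpow n u k.-1 = v \/ gpow n v k.-1 = u).

Definition hamiltonian (T : finType) (adj : T -> T -> Prop) : Prop :=
  exists (x0 : T) (s : seq T), [/\ uniq s, (forall x, x \in s), 3 <= size s &
    forall i, i < size s ->
      adj (nth x0 s i) (nth x0 s (i.+1 %% size s))].

(* Main.v *)
Require Import Defs.
From mathcomp Require Import all_boot.
From mathcomp Require Import zify.

Lemma gm_eq k : gm k.+2 = 2 * 2 ^ k.
Proof. by rewrite /gm /= expnS. Qed.

Lemma pow_P {n} v k : 0 < gm n -> v < gm n -> gpow n v k < gm n.
Proof.
move=> m0 hv; elim: k => [|k IH] //=.
by rewrite /goplus IH hv ltn_pmod.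
Qed.

Lemma pow_H {n} a k : 3 <= n -> gm n <= a -> a < 2 ^ n ->
  gpow n a k = a \/ gpow n a k = 0.
Proof.
case: n => [|[|[|n]]] //= _; set N := n.+1.
rewrite gm_eq => ha1 ha2.
have h2 : 2 ^ N.+2 = 2 * (2 * 2 ^ N) by rewrite !expnS.
rewrite h2 in ha2.
have p0 : 0 < 2 ^ N by rewrite expn_gt0.
elim: k => [|k IH] /=; first by left.
case: IH => ->; rewrite /goplus gm_eq.
- right. rewrite ltnNge ha1 /=.
  have -> : (2 * 2 ^ N) %/ 2 = 2 ^ N by rewrite mulKn.
  have -> : (2 ^ N + 1) * a + (2 ^ N - 1) * a = a * (2 * 2 ^ N) by nia.
  by rewrite modnMl.
- left. have -> : (2 * 2 ^ N) %/ 2 = 2 ^ N by rewrite mulKn.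
  have m0 : 0 < 2 * 2 ^ N by lia.
  rewrite m0 ltnNge ha1 /= add0n.
  have e : a = (a - 2 * 2 ^ N) + 2 * 2 ^ N by lia.
  rewrite {1}e modnDr modn_small; lia.
Qed.

Lemma adj_H {n} {h v : 'I_(2 ^ n)} : 3 <= n -> gm n <= h ->
  power_adj h v -> val v = 0.
Proof.
move=> n3 hh [hne [k [_ [E|E]]]].
- case: (pow_H h k.-1 n3 hh (ltn_ord h)); rewrite E // => e.
  by case: hne; apply: val_inj.
- have m0 : 0 < gm n by rewrite /gm expn_gt0.
  case: (ltnP v (gm n)) => hv.
  + have := pow_P v k.-1 m0 hv; rewrite E; lia.
  + case: (pow_H v k.-1 n3 hv (ltn_ord v)); rewrite E => e.
    * by case: hne; apply: val_inj.
    * lia.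
Qed.

Theorem mainTheorem2 (n : nat) : 3 <= n -> ~ hamiltonian (@power_adj n).
Proof.
move=> n3 [x0 [s [us alls sz adj]]].
have hlt : gm n < 2 ^ n.
  have : forall r, 3 <= r -> gm r < 2 ^ r.
    by case=> [|[|r]] //= _; rewrite /gm /= ltn_exp2l.
  by apply.
set h : 'I_(2 ^ n) := Ordinal hlt.
have hh : gm n <= h by [].
set i := index h s.
have hi : i < size s by rewrite index_mem.
have nh : nth x0 s i = h by rewrite nth_index.
have Hn : val (nth x0 s (i.+1 %% size s)) = 0.
  by apply: (adj_H n3 hh); rewrite -nh; apply: adj.
pose p := if i == 0 then (size s).-1 else i.-1.
have hp : p < size s by rewrite /p; case: ifP => _; lia.
have hpi : p.+1 %% size s = i.
  rewrite /p; case: ifP => /eqP e.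
  - rewrite e prednK ?modnn //; lia.
  - rewrite prednK ?modn_small //; lia.
have Hp : val (nth x0 s p) = 0.
  apply: (adj_H n3 hh); rewrite -nh -hpi.
  have [a b] := adj p hp; split; first by move=> q; apply: a.
  by case: b => k [k0 [c|c]]; exists k; split => //; [right|left].
have : nth x0 s (i.+1 %% size s) = nth x0 s p by apply: val_inj; rewrite Hn Hp.
move/eqP; rewrite nth_uniq // ?ltn_pmod //; last by lia.
move/eqP.
have [e|ne] := eqVneq i.+1 (size s).
- rewrite e modnn /p; case: ifP => /eqP; lia.
- rewrite modn_small; last by lia.
  rewrite /p; case: ifP => /eqP; lia.
Qed.
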